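(* Let $q$ be an acyclic Boolean conjunctive query. If the attack graph of $q$ contains a strong cycle, then it contains a strong cycle of length $2$.
   Context: Atoms $R(s_1,\dots,s_n)$ have variables or constants as arguments; each relation name has a signature $[n,k]$ with primary key positions $1,\dots,k$. $\mathit{key}(F)$ is the set of variables in the primary-key positions of atom $F$, $\mathit{vars}(F)$ the set of variables of $F$. A Boolean conjunctive query $q$ is a finite set of atoms; $\mathit{vars}(q)$ its variables. A join tree for $q$ is an undirected tree on the atoms of $q$ such that whenever a variable occurs in atoms $F$ and $G$ it occurs in every atom on the path between them; the edge between $F$ and $G$ is labeled $\mathit{vars}(F)\cap\mathit{vars}(G)$. $q$ is acyclic if it has a join tree. $\mathit{FD}(q)=\{\mathit{key}(F)\to\mathit{vars}(F)\mid F\in q\}$ (functional dependencies over variables); $F^{+,q}=\{x\in\mathit{vars}(q)\mid \mathit{FD}(q\setminus\{F\})\models\mathit{key}(F)\to x\}$; $F^{\oplus,q}=\{x\in\mathit{vars}(q)\mid \mathit{FD}(q)\models\mathit{key}(F)\to x\}$. The attack graph of $q$, computed from any join tree $\tau$ (independent of the choice), has an edge (attack) $F\to G$ for distinct atoms iff every label $L$ on the path between $F$ and $G$ in $\tau$ satisfies $L\not\subseteq F^{+,q}$. An attack $F\to G$ is weak if $\mathit{key}(G)\subseteq F^{\oplus,q}$ and strong otherwise. A cycle of length $n$ is a sequence of attacks $F_0\to F_1\to\dots\to F_{n-1}\to F_0$ with pairwise distinct $F_i$; it is strong if at least one of its attacks is strong. *)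

(* Defs.v *)
From mathcomp Require Import all_boot.
From Stdlib Require List.

Set Implicit Arguments.
Unset Strict Implicit.
Unset Printing Implicit Defensive.

Section CQ.

(* V: variables, C: constants, Rel: relation names with signature
   [arity r, keylen r]. *)
Variables (V C Rel : Type) (arity keylen : Rel -> nat).

Inductive term : Type := TVar of V | TConst of C.

Record atom : Type := mkAtom { a_rel : Rel; a_args : seq term }.

Definition wf_atom (F : atom) : Prop :=
  size (a_args F) = arity (a_rel F) /\ 1 <= keylen (a_rel F) <= arity (a_rel F).

Definition key (F : atom) (x : V) : Prop :=
  exists i, i < keylen (a_rel F) /\ List.nth_error (a_args F) i = Some (TVar x).

Definition vars (F : atom) (x : V) : Prop := List.In (TVar x) (a_args F).

(* A Boolean conjunctive query is a finite set of atoms, represented by an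
   injective enumeration q : 'I_n -> atom. *)
Variables (n : nat) (q : 'I_n -> atom).

Definition vars_q (x : V) : Prop := exists i, vars (q i) x.

Definition fd_sat (D : Type) (I : (V -> D) -> Prop) (X Y : V -> Prop) : Prop :=
  forall t1 t2 : V -> D, I t1 -> I t2 ->
    (forall x, X x -> t1 x = t2 x) -> forall y, Y y -> t1 y = t2 y.

(* FD(S) |= X -> y, where S selects the atoms of a subquery and
   FD(S) = { key(F) -> vars(F) | F in S } (logical implication) *)
Definition fd_entails (S : 'I_n -> Prop) (X : V -> Prop) (y : V) : Prop :=
  forall (D : Type) (I : (V -> D) -> Prop),
    (forall i, S i -> fd_sat I (key (q i)) (vars (q i))) ->
    fd_sat I X (fun z => z = y).

Definition plus_q (F : 'I_n) (x : V) : Prop :=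
  vars_q x /\ fd_entails (fun j => j <> F) (key (q F)) x.

Definition oplus_q (F : 'I_n) (x : V) : Prop :=
  vars_q x /\ fd_entails (fun _ => True) (key (q F)) x.

Variable tau : rel 'I_n.  (* edge relation of an undirected graph on the atoms *)

Definition spath (F : 'I_n) (p : seq 'I_n) (G : 'I_n) : Prop :=
  path tau F p /\ last F p = G /\ uniq (F :: p).

Definition is_tree : Prop :=
  (forall x y, tau x y = tau y x) /\ (forall x, ~~ tau x x) /\
  (forall F G, exists p, spath F p G /\ forall p', spath F p' G -> p' = p).

Definition join_tree : Prop :=
  is_tree /\
  forall F G p, spath F p G -> forall x, vars (q F) x -> vars (q G) x ->
    forall H, H \in F :: p -> vars (q H) x.

Definition label (F G : 'I_n) (x : V) : Prop := vars (q F) x /\ vars (q G) x.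

Fixpoint edges_ok (P : 'I_n -> 'I_n -> Prop) (x : 'I_n) (p : seq 'I_n) : Prop :=
  if p is y :: p' then P x y /\ edges_ok P y p' else True.

Definition attack (F G : 'I_n) : Prop :=
  F <> G /\
  exists p, spath F p G /\
    edges_ok (fun H H' => ~ (forall x, label H H' x -> plus_q F x)) F p.

Definition weak_attack (F G : 'I_n) : Prop :=
  attack F G /\ forall x, key (q G) x -> oplus_q F x.

Definition strong_attack (F G : 'I_n) : Prop :=
  attack F G /\ ~ (forall x, key (q G) x -> oplus_q F x).

Definition is_cycle (c : seq 'I_n) : Prop :=
  0 < size c /\ uniq c /\
  forall i (x0 : 'I_n), i < size c ->
    attack (nth x0 c i) (nth x0 c (i.+1 %% size c)).

Definition strong_cycle (c : seq 'I_n) : Prop :=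
  is_cycle c /\
  exists i (x0 : 'I_n), i < size c /\
    strong_attack (nth x0 c i) (nth x0 c (i.+1 %% size c)).

End CQ.

(* Main.v *)
Require Import Defs.
From mathcomp Require Import all_boot.
From Stdlib Require Import Classical ClassicalEpsilon.
From Stdlib Require List.

Set Implicit Arguments.
Unset Strict Implicit.
Unset Printing Implicit Defensive.

Definition pb (P : Prop) : bool :=
  if excluded_middle_informative P then true else false.

Lemma pbP P : reflect P (pb P).
Proof. by rewrite /pb; case: excluded_middle_informative => h; constructor. Qed.


Lemma walk_rev (T : Type) (e : rel T) : (forall x y, e x y = e y x) ->
  forall p x, path e x p -> exists p', path e (last x p) p' /\ last (last x p) p' = x.
Proof.
move=> es; elim=> [|y p IH] x /=; first by exists [::].
case/andP=> exy /IH [p' [H1 H2]]; exists (rcons p' x).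
by rewrite rcons_path H1 H2 es exy last_rcons.
Qed.

Lemma split_path (T : Type) (e1 e2 : rel T) p x : path e1 x p -> ~~ path e2 x p ->
  exists a v b, p = a ++ v :: b /\ e1 (last x a) v /\ ~~ e2 (last x a) v.
Proof.
elim: p x => [|y p IH] x //=.
case/andP=> e1xy H1; case e2xy: (e2 x y) => /= H2.
  have [a [v [b [-> [? ?]]]]] := IH y H1 H2.
  by exists (y :: a), v, b.
by exists [::], y, p; rewrite /= e1xy e2xy.
Qed.

Section Main.
Variables (V C Rel : Type) (arity keylen : Rel -> nat) (n : nat)
  (q : 'I_n -> atom V C Rel) (tau : rel 'I_n).

Notation ent := (fd_entails keylen q).

Lemma ent_refl S X y : X y -> ent S X y.
Proof. move=> Xy D I HI t1 t2 I1 I2 Hag z ->; exact: Hag. Qed.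

Lemma ent_step S X K : S K -> (forall z, key keylen (q K) z -> ent S X z) ->
  forall y, vars (q K) y -> ent S X y.
Proof.
move=> SK Hk y Vy D I HI t1 t2 I1 I2 Hag z ->.
apply: (HI K SK t1 t2 I1 I2) => //.
move=> x kx; exact: (Hk x kx D I HI t1 t2 I1 I2 Hag x).
Qed.

Lemma ent_trans S X Y y : (forall x, Y x -> ent S X x) -> ent S Y y -> ent S X y.
Proof.
move=> HY HYy D I HI t1 t2 I1 I2 Hag z ->.
apply: (HYy D I HI t1 t2 I1 I2) => // x Yx.
exact: (HY x Yx D I HI t1 t2 I1 I2 Hag x).
Qed.

Lemma ent_least S X (Z : V -> Prop) y : ent S X y ->
  (forall x, X x -> Z x) ->
  (forall K, S K -> (forall x, key keylen (q K) x -> Z x) ->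
     forall z, vars (q K) z -> Z z) -> Z y.
Proof.
move=> H HX HK.
pose t1 := fun _ : V => true.
pose t2 := fun x => pb (Z x).
pose I := fun t => t = t1 \/ t = t2.
have key : forall K, S K -> fd_sat I (key keylen (q K)) (vars (q K)).
  move=> K SK u1 u2 [->|->] [->|->] Hag z Vz //.
  - rewrite /t1 /t2; apply/esym/pbP; apply: (HK K SK) => // x kx.
    by apply/pbP; have := Hag x kx; rewrite /t1 /t2 => <-.
  - rewrite /t1 /t2; apply/pbP; apply: (HK K SK) => // x kx.
    by apply/pbP; have := Hag x kx; rewrite /t1 /t2 => ->.
have := H bool I key t1 t2 (or_introl erefl) (or_intror erefl).
move=> /(_ _ y erefl) h.
suff: t2 y by move/pbP.
rewrite -h //.
move=> x Xx; rewrite /t1 /t2; apply/esym/pbP; exact: HX.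
Qed.


Lemma oplus_trans F G H :
  (forall x, key keylen (q G) x -> oplus_q keylen q F x) ->
  (forall x, key keylen (q H) x -> oplus_q keylen q G x) ->
  (forall x, key keylen (q H) x -> oplus_q keylen q F x).
Proof.
move=> h1 h2 x kx; have [vx ex] := h2 x kx; split => //.
apply: ent_trans ex => y ky; exact: (h1 y ky).2.
Qed.

Hypothesis Hjt : join_tree q tau.

Definition Pa F x y := ~ (forall z, label q x y z -> plus_q keylen q F z).
Definition good F : rel 'I_n := fun x y => tau x y && pb (Pa F x y).

Lemma tau_sym x y : tau x y = tau y x.
Proof. by case: Hjt => [[h _] _]. Qed.

Lemma good_sym F x y : good F x y = good F y x.
Proof.
rewrite /good tau_sym; congr (_ && _).
apply/pbP/pbP => h1 h2; apply: h1 => z [a b]; exact: h2.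
Qed.

Lemma edges_path P x p : path tau x p -> edges_ok P x p ->
  path (fun a b => tau a b && pb (P a b)) x p.
Proof.
elim: p x => [|y p IH] x //= /andP[t1 t2] [h1 h2].
rewrite t1 /=; apply/andP; split; [by apply/pbP | exact: IH].
Qed.

Lemma path_edges P x p : path (fun a b => tau a b && pb (P a b)) x p -> edges_ok P x p.
Proof.
elim: p x => [|y p IH] x //= /andP[/andP[_ /pbP h1] h2]; split => //; exact: IH.
Qed.

Lemma attack_walk F G : attack keylen q tau F G ->
  exists p, spath tau F p G /\ path (good F) F p.
Proof.
case=> FG [p [sp he]]; exists p; split => //.
apply: edges_path => //; by case: sp.
Qed.

Lemma walk_attack F G w : F <> G -> path (good F) F w -> last F w = G ->
  attack keylen q tau F G.
Proof.
move=> FG Hw Hl; rewrite -Hl in FG *.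
move: FG; case: (shortenP Hw) => p' Hp' Hu _ FG.
split => //; exists p'; split.
  split; first by apply: sub_path Hp' => a b /andP[].
  by split.
exact: path_edges.
Qed.

Definition Ent F := fd_entails keylen q (fun j => j <> F) (key keylen (q F)).

Lemma key_vars (A : atom V C Rel) z : key keylen A z -> vars A z.
Proof. case=> i [_ h]; exact: List.nth_error_In h. Qed.

Lemma nokey F G : attack keylen q tau F G -> ~ (forall z, key keylen (q G) z -> Ent F z).
Proof.
move=> att hk; have FG := att.1.
have [p [[_ [hl _]] hp]] := attack_walk att.
have hv : forall y, vars (q G) y -> Ent F y.
  apply: ent_step => //; by move=> e; apply: FG; rewrite e.
case/lastP: p hl hp => [/= e _|p y]; first by apply: FG.
rewrite last_rcons rcons_path => -> /andP[_ /andP[_ /pbP]]; apply => z [_ vz].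
split; [by exists G | exact: hv].
Qed.

Lemma trans F G H : attack keylen q tau F G -> attack keylen q tau G H ->
  attack keylen q tau F H \/ attack keylen q tau G F.
Proof.
move=> aFG aGH.
case: (classic (attack keylen q tau G F)) => [|nGF]; [by right|left].
case: (classic (F = H)) => [eFH|nFH].
  by rewrite -eFH in aGH; exfalso; exact: nGF aGH.
apply: NNPP => nFH'.
have FG := aFG.1.
have [p1 [[tp1 [lp1 up1]] gp1]] := attack_walk aFG.
have [p2 [[_ [lp2 _]] gp2]] := attack_walk aGH.
have np1 : ~~ path (good G) F p1.
  apply/negP => h; have [p' [h1 h2]] := walk_rev (good_sym G) h.
  rewrite lp1 in h1 h2; apply: nGF; apply: (walk_attack _ h1 h2).
  by move=> e; apply: FG.
have [a [v [b [ep1 [tuv nguv]]]]] := split_path tp1 np1.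
set u := last F a in tuv nguv.
have Luv : forall z, label q u v z -> plus_q keylen q G z.
  apply: NNPP => h; move/negP: nguv; apply; rewrite /good tuv /=.
  by apply/pbP.
pose isf x y := ((x == u) && (y == v)) || ((x == v) && (y == u)).
pose tf : rel 'I_n := fun x y => tau x y && ~~ isf x y.
have tf_sym : forall x y, tf x y = tf y x.
  move=> x y; rewrite /tf tau_sym; congr (_ && ~~ _).
  by rewrite /isf orbC (andbC (x == v)) (andbC (x == u)).
pose T2 K := exists w, path tf G w /\ last G w = K.
have cA : ~ T2 F.
  case=> w [hw lw].
  have [w' [hw' lw']] := walk_rev tf_sym hw; rewrite lw in hw' lw'.
  move: lw'; case: (shortenP hw') => p' hp' up' _ lp'.
  have sp' : spath tau F p' G.
    split; first by apply: sub_path hp' => c d /andP[].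
    by split.
  have [p0 [_ uq]] := Hjt.1.2.2 F G.
  have e1 := uq _ sp'; have e2 := uq p1 (conj tp1 (conj lp1 up1)).
  have : path tf F p1 by rewrite e2 -e1.
  rewrite ep1 cat_path /= => /andP[_ /andP[ht _]].
  by move: ht; rewrite /tf /isf !eqxx /= andbF.
have cB : forall K1 K2, ~ T2 K1 -> T2 K2 -> forall z, vars (q K1) z -> vars (q K2) z ->
    label q u v z.
  move=> K1 K2 n1 [w [hw lw]] z v1 v2.
  have [p [[tp [lp upp]] _]] := Hjt.1.2.2 K2 K1.
  case: (boolP (path tf K2 p)) => htp.
    exfalso; apply: n1; exists (w ++ p).
    by rewrite cat_path last_cat lw hw htp lp.
  have [a' [y [b' [ep [txy ntxy]]]]] := split_path tp htp.
  have hall : forall H, H \in K2 :: p -> vars (q H) z :=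
    Hjt.2 K2 K1 p (conj tp (conj lp upp)) z v2 v1.
  have vx : vars (q (last K2 a')) z.
    by apply: hall; rewrite ep -cat_cons mem_cat mem_last.
  have vy : vars (q y) z.
    by apply: hall; rewrite ep -cat_cons mem_cat mem_head orbT.
  move: ntxy; rewrite /tf txy /= negbK /isf.
  case/orP=> /andP[/eqP ex /eqP ey].
    by split; [rewrite -ex | rewrite -ey].
  by split; [rewrite -ey | rewrite -ex].
have cC : forall z, Ent F z -> (exists K, T2 K /\ vars (q K) z) -> plus_q keylen q G z.
  move=> z ez.
  pose Z z := Ent F z /\ ((exists K, T2 K /\ vars (q K) z) -> plus_q keylen q G z).
  suff : Z z by case.
  apply: (ent_least (Z:=Z) ez).
    move=> x kx; split; first exact: ent_refl.
    case=> K [tK vK]; apply: Luv; exact: (cB F K cA tK x (key_vars kx) vK).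
  move=> K nKF hk y vy; split.
    apply: (ent_step nKF) => // x kx; exact: (hk x kx).1.
  case=> K2 [tK2 vK2].
  case: (classic (T2 K)) => tK; last by apply: Luv; exact: (cB K K2 tK tK2 y vy vK2).
  case: (classic (K = G)) => eKG.
    exfalso; apply: (nokey aFG) => x kx; rewrite -eKG in kx; exact: (hk x kx).1.
  have kG : forall x, key keylen (q K) x -> plus_q keylen q G x.
    move=> x kx; apply: (hk x kx).2; exists K; split => //; exact: key_vars.
  split; first by exists K.
  apply: (ent_step (S:=fun j => j <> G) (K:=K)) => // x kx; exact: (kG x kx).2.
have np2 : ~~ path (good F) G p2.
  apply/negP => h; apply: nFH'; apply: (walk_attack (w:=p1 ++ p2)) => //.
    by rewrite cat_path gp1 lp1 h.
  by rewrite last_cat lp1.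
have [a2 [y [b2 [ep2 [gxy ngxy]]]]] := split_path gp2 np2.
set x := last G a2 in gxy ngxy.
have tx : T2 x.
  exists a2; split => //.
  move: gp2; rewrite ep2 cat_path => /andP[h _].
  apply: sub_path h => c d gcd.
  have tcd : tau c d by case/andP: gcd.
  rewrite /tf tcd /=; apply/negP => icd.
  move: gcd => /andP[_ /pbP]; apply.
  move: icd; rewrite /isf; case/orP=> /andP[/eqP -> /eqP ->] w [h1 h2]; apply: Luv.
    by split.
  by split.
have LF : forall z, label q x y z -> plus_q keylen q F z.
  apply: NNPP => h; move/negP: ngxy; apply; rewrite /good.
  have -> : tau x y by case/andP: gxy.
  by apply/pbP.
move: gxy => /andP[_ /pbP]; apply => z lz.
apply: (cC z (LF z lz).2); exists x; split => //; exact: lz.1.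
Qed.

Lemma core N : forall s a0 a1, size s <= N -> strong_attack keylen q tau a0 a1 ->
  edges_ok (attack keylen q tau) a1 s -> last a1 s = a0 ->
  exists F G, strong_attack keylen q tau F G /\ attack keylen q tau G F.
Proof.
elim: N => [|N IH] [|a2 s1] a0 a1 //=.
- by move=> _ [[ne _] _] _ e; exfalso; apply: ne.
- by move=> _ [[ne _] _] _ e; exfalso; apply: ne.
move=> hsz s01 [a12 eds1] hl.
case: s1 hsz eds1 hl => [|a3 s2] /= hsz.
  by move=> _ e; exists a0, a1; split => //; rewrite -e.
move=> [a23 eds2] hl.
case: (trans a12 a23) => [a13|a21].
  by apply: (IH (a3 :: s2) a0 a1).
case: (classic (strong_attack keylen q tau a2 a1)) => [st|nst].
  by exists a2, a1.
have w21 : forall x, key keylen (q a1) x -> oplus_q keylen q a2 x.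
  by apply: NNPP => h; apply: nst.
case: (trans s01.1 a12) => [a02|a10]; last by exists a0, a1.
case: (classic (strong_attack keylen q tau a0 a2)) => [st2|nst2].
  by apply: (IH (a3 :: s2) a0 a2).
have w02 : forall x, key keylen (q a2) x -> oplus_q keylen q a0 x.
  by apply: NNPP => h; apply: nst2.
by exfalso; apply: s01.2; exact: oplus_trans w02 w21.
Qed.

End Main.

Theorem lemma4 (V C Rel : Type) (arity keylen : Rel -> nat)
  (n : nat) (q : 'I_n -> atom V C Rel) (tau : rel 'I_n) :
  injective q ->
  (forall i, wf_atom arity keylen (q i)) ->
  join_tree q tau ->
  (exists c, strong_cycle keylen q tau c) ->
  exists c, strong_cycle keylen q tau c /\ size c = 2.
Proof.
move=> _ _ Hjt [c [[pos [_ hc]] [i [x0 [ilt st]]]]].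
set m := size c in pos hc ilt st.
pose f j := nth x0 c ((i + j) %% m).
have fa : forall j, attack keylen q tau (f j) (f j.+1).
  move=> j; have := hc ((i + j) %% m) x0 (ltn_pmod _ pos).
  have -> : ((i + j) %% m).+1 %% m = (i + j.+1) %% m.
    by rewrite addnS -addn1 modnDml addn1.
  by [].
have eo : forall k j, edges_ok (attack keylen q tau) (f j) (map f (iota j.+1 k)).
  elim=> [|k IHk] j //=.
have el : forall k j, last (f j) (map f (iota j.+1 k)) = f (j + k).
  elim=> [|k IHk] j /=; first by rewrite addn0.
  by rewrite IHk addSnnS.
have f0 : f 0 = nth x0 c i by rewrite /f addn0 modn_small.
have f1 : f 1 = nth x0 c (i.+1 %% m) by rewrite /f addn1.
have fm : f (1 + (m - 1)) = nth x0 c i.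
  by rewrite subnKC // /f modnDr modn_small.
have hs : strong_attack keylen q tau (f 0) (f 1) by rewrite f0 f1.
have hl : last (f 1) (map f (iota 2 (m - 1))) = f 0 by rewrite el fm f0.
have [F [G [sFG aGF]]] := core Hjt (leqnn _) hs (eo _ 1) hl.
exists [:: F; G]; split => //; split.
  split => //; split.
    by rewrite /= inE andbT; apply/negP => /eqP e; apply: sFG.1.1 e.
  by move=> [|[|j]] y //= _; first [exact: sFG.1 | exact: aGF].
by exists 0, x0; split.
Qed.
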